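(* Let $\gamma\in(0,1)$, $\lambda=0$, and assume $\widehat\Sigma$ is positive definite and $I-\gamma\widehat M^\pi$ is invertible. Define the (discounted) FQI-OPE estimator $\widehat v^\pi:=(\nu_0^\pi)^\top(I-\gamma\widehat M^\pi)^{-1}\widehat R$. For $f,g\in\mathcal Q$ define $$J(f,g):=\frac1N\sum_{n=1}^N\Big(\Big(f(s_n,a_n)-\gamma\int_{\mathcal A}f(s_n',a')\pi(a'\mid s_n')\,da'\Big)g(s_n,a_n)-\tfrac12 g(s_n,a_n)^2\Big)-\mathbb E\big[f(s_0,a_0)\mid s_0\sim\xi_0,a_0\sim\pi(\cdot\mid s_0)\big],$$ let $(f^*,g^* )$ be the solution of $\min_{f\in\mathcal Q}\max_{g\in\mathcal Q}J(f,g)$, and set $\widehat v^\pi_{\mathsf{DualDICE}}:=\frac1N\sum_{n=1}^N g^*(s_n,a_n)r_n'$. Then $\widehat v^\pi_{\mathsf{DualDICE}}=\widehat v^\pi$.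
   Context: $\mathcal X=\mathcal S\times\mathcal A$; $\pi$ is a target policy, $\xi_0$ an initial state distribution. $\phi:\mathcal X\to\mathbb R^d$ is a feature map, $\mathcal Q=\{\phi(\cdot)^\top w:w\in\mathbb R^d\}$, $\phi^\pi(s):=\int_{\mathcal A}\phi(s,a)\pi(a\mid s)\,da$. Data $\{(s_n,a_n,s_n',r_n')\}_{n=1}^N$. $\widehat\Sigma:=\lambda I+\sum_{n}\phi(s_n,a_n)\phi(s_n,a_n)^\top$, $\widehat R:=\widehat\Sigma^{-1}\sum_n r_n'\phi(s_n,a_n)$, $\widehat M^\pi:=\widehat\Sigma^{-1}\sum_n\phi(s_n,a_n)\phi^\pi(s_n')^\top$, $\nu_0^\pi:=\mathbb E[\phi(s,a)\mid s\sim\xi_0,a\sim\pi(\cdot\mid s)]$. *)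

(* Defs.v *)
From HB Require Import structures.
From mathcomp Require Import all_boot all_order all_algebra.
Set Implicit Arguments. Unset Strict Implicit. Unset Printing Implicit Defensive.
Import Order.TTheory GRing.Theory Num.Theory.
Local Open Scope ring_scope.

Section FQI.
Variables (R : realFieldType) (S A : Type) (d N : nat).
Variable phi : S -> A -> 'cV[R]_d.
(* phipi s = \int_A phi(s,a) pi(a|s) da *)
Variable phipi : S -> 'cV[R]_d.
(* nu0 = E[phi(s,a) | s ~ xi0, a ~ pi(.|s)] *)
Variable nu0 : 'cV[R]_d.
Variables (s : 'I_N -> S) (a : 'I_N -> A) (s' : 'I_N -> S) (r : 'I_N -> R).

Definition Sigma_hat (lam : R) : 'M[R]_d :=
  lam%:M + \sum_(n < N) phi (s n) (a n) *m (phi (s n) (a n))^T.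

Definition R_hat (lam : R) : 'cV[R]_d :=
  invmx (Sigma_hat lam) *m \sum_(n < N) r n *: phi (s n) (a n).

Definition M_hat (lam : R) : 'M[R]_d :=
  invmx (Sigma_hat lam) *m \sum_(n < N) phi (s n) (a n) *m (phipi (s' n))^T.

Definition v_hat (lam gamma : R) : R :=
  (nu0^T *m invmx (1%:M - gamma *: M_hat lam) *m R_hat lam) 0 0.

(* element of Q with weight w, evaluated at (x,y) *)
Definition qeval (w : 'cV[R]_d) (x : S) (y : A) : R := ((phi x y)^T *m w) 0 0.
(* \int_A f(x,a') pi(a'|x) da' for f = phi^T w (by linearity) *)
Definition qpi (w : 'cV[R]_d) (x : S) : R := ((phipi x)^T *m w) 0 0.
(* E[f(s0,a0) | s0 ~ xi0, a0 ~ pi] for f = phi^T w (by linearity) *)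
Definition qinit (w : 'cV[R]_d) : R := (nu0^T *m w) 0 0.

Definition J (gamma : R) (f g : 'cV[R]_d) : R :=
  (N%:R)^-1 * \sum_(n < N)
     ((qeval f (s n) (a n) - gamma * qpi f (s' n)) * qeval g (s n) (a n)
       - 2^-1 * qeval g (s n) (a n) ^+ 2)
  - qinit f.

(* (fs, gs) solves min_f max_g J(f,g): gs maximizes J(fs, .), and fs minimizes
   f |-> max_g J(f,g), i.e. for every f some g achieves J(f,g) >= J(fs,gs). *)
Definition minmax_solution (gamma : R) (fs gs : 'cV[R]_d) : Prop :=
  (forall g, J gamma fs g <= J gamma fs gs) /\
  (forall f, exists g, J gamma fs gs <= J gamma f g).

Definition v_dualdice (g : 'cV[R]_d) : R :=
  (N%:R)^-1 * \sum_(n < N) qeval g (s n) (a n) * r n.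

End FQI.

Definition posdef (R : realFieldType) (d : nat) (M : 'M[R]_d) : Prop :=
  forall x : 'cV[R]_d, x != 0 -> 0 < (x^T *m M *m x) 0 0.

(* Main.v *)
Require Import Defs.
From HB Require Import structures.
From mathcomp Require Import all_boot all_order all_algebra ring lra.
Import Order.TTheory GRing.Theory Num.Theory.
Local Open Scope ring_scope.
Set Implicit Arguments. Unset Strict Implicit.

Definition dot {R : realFieldType} {d : nat} (u v : 'cV[R]_d) : R := (u^T *m v) 0 0.

Lemma dotC (R : realFieldType) (d : nat) (u v : 'cV[R]_d) : dot u v = dot v u.
Proof. by rewrite /dot !mxE; apply: eq_bigr => i _; rewrite !mxE mulrC. Qed.

Lemma dotDr (R : realFieldType) (d : nat) (u v w : 'cV[R]_d) : dot u (v + w) = dot u v + dot u w.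
Proof. by rewrite /dot mulmxDr mxE. Qed.

Lemma dotZr (R : realFieldType) (d : nat) (u v : 'cV[R]_d) c : dot u (c *: v) = c * dot u v.
Proof. by rewrite /dot -scalemxAr mxE. Qed.

Lemma dotBr (R : realFieldType) (d : nat) (u v w : 'cV[R]_d) : dot u (v - w) = dot u v - dot u w.
Proof. by rewrite -scaleN1r dotDr dotZr mulN1r. Qed.

Lemma dotDl (R : realFieldType) (d : nat) (u v w : 'cV[R]_d) : dot (v + w) u = dot v u + dot w u.
Proof. by rewrite !(dotC _ u) dotDr. Qed.

Lemma dotBl (R : realFieldType) (d : nat) (u v w : 'cV[R]_d) : dot (v - w) u = dot v u - dot w u.
Proof. by rewrite !(dotC _ u) dotBr. Qed.

Lemma dotZl (R : realFieldType) (d : nat) (u v : 'cV[R]_d) c : dot (c *: v) u = c * dot v u.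
Proof. by rewrite !(dotC _ u) dotZr. Qed.

Lemma dot0r (R : realFieldType) (d : nat) (u : 'cV[R]_d) : dot u 0 = 0.
Proof. by rewrite /dot mulmx0 mxE. Qed.

Lemma dot_sumr (R : realFieldType) (d N : nat) (u : 'cV[R]_d) (F : 'I_N -> 'cV[R]_d) :
  dot u (\sum_(n < N) F n) = \sum_(n < N) dot u (F n).
Proof. by rewrite /dot mulmx_sumr summxE. Qed.

Lemma dot_mul (R : realFieldType) (d : nat) (u v : 'cV[R]_d) (A : 'M[R]_d) :
  dot u (A *m v) = dot (A^T *m u) v.
Proof. by rewrite /dot trmx_mul trmxK mulmxA. Qed.

Lemma dot_outer (R : realFieldType) (d : nat) (u v x y : 'cV[R]_d) :
  dot u ((x *m y^T) *m v) = dot u x * dot y v.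
Proof.
by rewrite -mulmxA (mx11_scalar (y^T *m v)) mul_mx_scalar dotZr mulrC.
Qed.

Lemma quad0 (R : realFieldType) (al be : R) :
  (forall t, 0 <= al * t + be * t ^+ 2) -> al = 0.
Proof.
move=> H; apply/eqP/negP => /negP hal.
set c := `|be| + 1.
have c0 : 0 < c by rewrite /c ltr_pwDr // normr_ge0.
have bc : be < c by rewrite /c (le_lt_trans (ler_norm be)) // ltrDl.
set u := al / c.
have ale : al = u * c by rewrite /u divfK // gt_eqF.
have u0 : u != 0 by rewrite /u mulf_neq0 // invr_eq0 gt_eqF.
have := H (- u); rewrite ale.
have u2 : 0 < u ^+ 2 by rewrite lt0r sqrf_eq0 u0 sqr_ge0.
nra.
Qed.

Lemma le_of_eq' (R : realFieldType) (x y : R) : x = y -> x <= y.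
Proof. by move->. Qed.

Lemma step2_aux (R : realFieldType) (ni t x1 x2 x3 x4 x5 : R) :
 ni * (2^-1 * x1) - x4 <= ni * (2^-1 * (x1 + t*x2 + t*(x2 + t*x3))) - (x4 + t*x5) ->
 0 <= (ni * x2 - x5) * t + ni * (2^-1 * x3) * t ^+ 2.
Proof.
rewrite -subr_ge0 => H; apply: (le_trans H); apply: le_of_eq'.
by field.
Qed.

Unset Implicit Arguments.

Theorem theorem6 (R : realFieldType) (S A : Type) (d N : nat)
  (phi : S -> A -> 'cV[R]_d) (phipi : S -> 'cV[R]_d) (nu0 : 'cV[R]_d)
  (s : 'I_N -> S) (a : 'I_N -> A) (s' : 'I_N -> S) (r : 'I_N -> R)
  (gamma : R) (fs gs : 'cV[R]_d) :
  0 < gamma < 1 ->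
  posdef (Sigma_hat phi s a 0) ->
  (1%:M - gamma *: M_hat phi phipi s a s' 0) \in unitmx ->
  minmax_solution phi phipi nu0 s a s' gamma fs gs ->
  v_dualdice phi s a r gs = v_hat phi phipi nu0 s a s' r 0 gamma.
Proof.
move=> _ Hpd Hunit [Hmax Hmin].
set Sig := \sum_(n < N) phi (s n) (a n) *m (phi (s n) (a n))^T.
set Bt := \sum_(n < N) phipi (s' n) *m (phi (s n) (a n))^T.
set B := \sum_(n < N) phi (s n) (a n) *m (phipi (s' n))^T.
have SigE : Sigma_hat phi s a 0 = Sig by rewrite /Sigma_hat raddf0 add0r.
have SigT : Sig^T = Sig.
  rewrite /Sig linear_sum /=; apply: eq_bigr => n _; by rewrite trmx_mul trmxK.
have BtT : Bt^T = B.
  rewrite /Bt linear_sum /=; apply: eq_bigr => n _; by rewrite trmx_mul trmxK.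
have Pd : forall x, x != 0 -> 0 < dot x (Sig *m x).
  by move=> x /Hpd; rewrite SigE -mulmxA.
have Ssym : forall u v, dot u (Sig *m v) = dot v (Sig *m u).
  by move=> u v; rewrite dot_mul SigT dotC.
have Sunit : Sig \in unitmx.
  rewrite -row_free_unit -kermx_eq0; apply/eqP/row_matrixP => i; rewrite row0.
  set v := row i (kermx Sig).
  have vS : v *m Sig = 0 by rewrite /v -row_mul mulmx_ker row0.
  have Sx : Sig *m v^T = 0 by rewrite -SigT -trmx_mul vS trmx0.
  have : v^T == 0.
    apply/negPn/negP => hx; have := Pd _ hx; by rewrite Sx dot0r ltxx.
  by move/eqP => h; rewrite -(trmxK v) h trmx0.
set K := Sig - gamma *: Bt.
have Jeq : forall f g, J phi phipi nu0 s a s' gamma f g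
   = N%:R^-1 * (dot f (K *m g) - 2^-1 * dot g (Sig *m g)) - dot nu0 f.
  move=> f g; rewrite /J; congr (_ * _ - _).
  rewrite /K mulmxBl -scalemxAl dotBr dotZr /Sig /Bt !mulmx_suml !dot_sumr.
  rewrite !mulr_sumr -!sumrB; apply: eq_bigr => n _; rewrite !dot_outer.
  rewrite /qeval /qpi -!/(dot _ _) !(dotC f) !(dotC g); ring.
set gf := fun f : 'cV[R]_d => invmx Sig *m (K^T *m f).
have SgE : forall f, Sig *m gf f = K^T *m f by move=> f; rewrite /gf mulKVmx.
have e1 : forall f h, dot f (K *m h) = dot (gf f) (Sig *m h).
  by move=> f h; rewrite dot_mul -SgE dotC Ssym.
have Qnn : forall w, 0 <= dot w (Sig *m w).
  move=> w; have [->|hw] := eqVneq w 0; first by rewrite mulmx0 dot0r.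
  exact/ltW/Pd.
have Qid : forall f g, (dot f (K *m gf f) - 2^-1 * dot (gf f) (Sig *m gf f))
    - (dot f (K *m g) - 2^-1 * dot g (Sig *m g))
    = 2^-1 * dot (g - gf f) (Sig *m (g - gf f)).
  move=> f g; rewrite !e1 mulmxBr !dotBl !dotBr [dot g (Sig *m gf f)]Ssym.
lra.
have Ninv0 : 0 <= (N%:R : R)^-1 by rewrite invr_ge0 ler0n.
have Jle : forall f g, J phi phipi nu0 s a s' gamma f g
     <= J phi phipi nu0 s a s' gamma f (gf f).
  move=> f g; rewrite !Jeq lerD2r; apply: ler_wpM2l => //.
  rewrite -subr_ge0 Qid; apply: mulr_ge0; [by rewrite invr_ge0 ler0n | exact: Qnn].
have gsE : gs = gf fs.
  apply/eqP; rewrite -subr_eq0; apply/negPn/negP => hw.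
  have := Pd _ hw.
  have [N0|Npos] := posnP N.
    have -> : Sig = 0.
      by rewrite /Sig big1 // => -[i hi] _; exfalso; move: hi; rewrite N0.
    by rewrite mul0mx dot0r ltxx.
  have H := Hmax (gf fs); rewrite !Jeq lerD2r ler_pM2l ?invr_gt0 ?ltr0n // in H.
  move=> H3.
  have : 2^-1 * dot (gs - gf fs) (Sig *m (gs - gf fs)) <= 0 by rewrite -Qid subr_le0.
  rewrite leNgt => /negP; apply; apply: mulr_gt0 => //; by rewrite invr_gt0 ltr0n.
have step2 : forall e, N%:R^-1 * dot e (K *m gs) = dot nu0 e.
  move=> e; apply/eqP; rewrite -subr_eq0; apply/eqP.
  apply: (@quad0 _ _ (N%:R^-1 * (2^-1 * dot (gf e) (Sig *m gf e)))) => t.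
  have [g Hg] := Hmin (fs + t *: e).
  have := le_trans Hg (Jle _ g).
  have Jh : forall f, J phi phipi nu0 s a s' gamma f (gf f)
      = N%:R^-1 * (2^-1 * dot (gf f) (Sig *m gf f)) - dot nu0 f.
    by move=> f; rewrite Jeq e1; congr (_ * _ - _); lra.
  have gfD : gf (fs + t *: e) = gs + t *: gf e.
    by rewrite /gf !mulmxDr -!scalemxAr gsE.
  rewrite gsE Jh Jh gfD -gsE e1 mulmxDr -scalemxAr !dotDl !dotZl !dotDr !dotZr.
  rewrite [dot gs (Sig *m gf e)]Ssym.
  move=> H; exact: step2_aux H.
set y := \sum_(n < N) r n *: phi (s n) (a n).
have LHS : v_dualdice phi s a r gs = N%:R^-1 * dot gs y.
  rewrite /v_dualdice /y dot_sumr; congr (_ * _); apply: eq_bigr => n _.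
  by rewrite dotZr dotC mulrC /qeval /dot.
have ME : M_hat phi phipi s a s' 0 = invmx Sig *m B by rewrite /M_hat SigE.
have RE : R_hat phi s a r 0 = invmx Sig *m y by rewrite /R_hat SigE.
set U := 1%:M - gamma *: M_hat phi phipi s a s' 0.
have KT : K^T = Sig *m U.
  rewrite /U ME /K linearB linearZ /= SigT BtT mulmxBr mulmx1 -scalemxAr mulmxA.
  by rewrite mulmxV // mul1mx.
rewrite LHS /v_hat -mulmxA -/U RE.
change (N%:R^-1 * dot gs y = dot nu0 (invmx U *m (invmx Sig *m y))).
by rewrite -step2 dot_mul KT -mulmxA mulKVmx // mulKVmx // dotC.
Qed.
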